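(* Let $N$ be even. Let $\rho_0=\sum_{n=1}^Np_n|n\rangle\langle n|$ be a full-rank density matrix on $\mathbb{C}^N$, and let $G$ be a Hermitian operator with $\langle n|G|m\rangle\in\mathbb{R}$ for all $n,m$. Let $\rho_\lambda=e^{-i\lambda G}\rho_0e^{i\lambda G}$, and let $L_0$ be its symmetric logarithmic derivative at $\lambda=0$. Assume $L_0$ is full rank. Then: (3.1) $L_0$ is diagonal in an orthonormal basis $\{|\alpha_{i,k}\rangle: i=\pm,\ k=1,\dots,N/2\}$ whose eigenvalues are opposite in pairs: $L_0|\alpha_{\pm,k}\rangle=\pm\alpha_{+,k}|\alpha_{\pm,k}\rangle$ with $\alpha_{+,k}\in\mathbb{R}\setminus\{0\}$. (3.2) Let $V:\mathbb{C}^N\to\mathbb{C}^2\otimes\mathbb{C}^{N/2}$ be the unitary defined by $V|\alpha_{i,k}\rangle=|i\rangle\otimes|k\rangle$. Here $\{|+\rangle,|-\rangle\}$ is the eigenbasis of a Pauli operator $S_y$ on $\mathbb{C}^2$ with $S_y|\pm\rangle=\pm|\pm\rangle$, and $\{|k\rangle\}$ is an orthonormal basis of $\mathbb{C}^{N/2}$. Under this factorization $\mathcal{H}_N\cong\mathcal{H}_2\otimes\mathcal{H}_{N/2}$, the SLD takes the product form $$VL_0V^\dagger=S_y\otimes\sum_{k=1}^{N/2}\alpha_{+,k}\,\Pi_k,\qquad \Pi_k=|k\rangle\langle k|.$$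
   Context: The symmetric logarithmic derivative $L_0$ is the Hermitian operator satisfying $\partial_\lambda\rho_\lambda|_{\lambda=0}=-i[G,\rho_0]=(\rho_0L_0+L_0\rho_0)/2$; it is unique because $\rho_0$ is full rank. *)

(* Defs.v *)
From HB Require Import structures.
From mathcomp Require Import all_boot all_order all_algebra.
From mathcomp Require Import sesquilinear spectral.
From mathcomp.real_closed Require Import mxtens.
Set Implicit Arguments. Unset Strict Implicit. Unset Printing Implicit Defensive.
Import Order.TTheory GRing.Theory Num.Theory.
Local Open Scope ring_scope.

Definition adjmx {C : numClosedFieldType} {m n} (A : 'M[C]_(m, n)) : 'M[C]_(n, m) :=
  (map_mx Num.conj A)^T.

Definition hermitian_op {C : numClosedFieldType} {n} (A : 'M[C]_n) : Prop :=
  adjmx A = A.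

Definition commr {C : numClosedFieldType} {n} (A B : 'M[C]_n) : 'M[C]_n :=
  A *m B - B *m A.

(* rho_lambda = exp(-i lambda G) rho0 exp(i lambda G); its derivative at
   lambda = 0 is -i[G, rho0]. *)
Definition is_SLD {C : numClosedFieldType} {n} (G rho0 L0 : 'M[C]_n) : Prop :=
  hermitian_op L0 /\
  - 'i *: commr G rho0 = (2%:R)^-1 *: (rho0 *m L0 + L0 *m rho0).

Definition Sy {C : numClosedFieldType} : 'M[C]_2 :=
  \matrix_(i < 2, j < 2)
    (if i == j then 0 else if i == 0 then - 'i else 'i).

(* eigenvectors |+> (b = true) and |-> (b = false) of S_y:
   |+-> = (|0> +- i|1>)/sqrt 2, with S_y |+-> = +- |+-> *)
Definition ketpm {C : numClosedFieldType} (b : bool) : 'cV[C]_2 :=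
  (sqrtC 2%:R)^-1 *: \col_(i < 2) (if i == 0 then 1 else if b then 'i else - 'i).

Definition ket {C : numClosedFieldType} {M} (k : 'I_M) : 'cV[C]_M := delta_mx k 0.

(* Main.v *)
Require Import Defs.
From HB Require Import structures.
From mathcomp Require Import all_boot all_order all_algebra.
From mathcomp Require Import sesquilinear spectral.
From mathcomp.real_closed Require Import mxtens.
From mathcomp Require Import zify ring.
Import Order.TTheory GRing.Theory Num.Theory.
Local Open Scope ring_scope.

Section Helpers.
Context {C : numClosedFieldType}.

Lemma adjmxM m n p (A : 'M[C]_(m,n)) (B : 'M_(n,p)) :
  adjmx (A *m B) = adjmx B *m adjmx A.
Proof. by rewrite /adjmx map_mxM trmx_mul. Qed.

Lemma adjmxK m n (A : 'M[C]_(m,n)) : adjmx (adjmx A) = A.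
Proof. by apply/matrixP => i j; rewrite !mxE conjCK. Qed.

Lemma adjmxZ m n c (A : 'M[C]_(m,n)) : adjmx (c *: A) = c^* *: adjmx A.
Proof. by apply/matrixP => i j; rewrite !mxE rmorphM. Qed.

Lemma adjmx0 m n : adjmx (0 : 'M[C]_(m,n)) = 0.
Proof. by apply/matrixP => i j; rewrite !mxE rmorph0. Qed.

Lemma adjmx_scalar n c : adjmx (c%:M : 'M[C]_n) = (c^*)%:M.
Proof. by apply/matrixP => i j; rewrite !mxE rmorphMn eq_sym. Qed.

Lemma adjmxE m n (A : 'M[C]_(m,n)) : adjmx A = (A ^t*)%sesqui.
Proof. by rewrite /adjmx map_trmx. Qed.

Lemma adjmx_cmx m n (A : 'M[C]_(m,n)) :
  adjmx (map_mx Num.conj A) = map_mx Num.conj (adjmx A).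
Proof. by apply/matrixP => i j; rewrite !mxE. Qed.

Lemma cmx_scalar n (c : C) : map_mx Num.conj (c%:M : 'M_n) = (c^*)%:M.
Proof. by apply/matrixP => i j; rewrite !mxE rmorphMn. Qed.

Lemma cmxZ m n c (A : 'M[C]_(m,n)) :
  map_mx Num.conj (c *: A) = c^* *: map_mx Num.conj A.
Proof. by apply/matrixP => i j; rewrite !mxE rmorphM. Qed.

Lemma unitary_adj {n} {V : 'M[C]_n} : V \is unitarymx ->
  V *m adjmx V = 1%:M /\ adjmx V *m V = 1%:M.
Proof.
move/unitarymxP; rewrite -adjmxE => H; split => //; exact: mulmx1C.
Qed.

Lemma onb_bound n (I : finType) (A : {set I}) (v : I -> 'cV[C]_n) :
  (forall i j, i \in A -> j \in A -> adjmx (v i) *m v j = (i == j)%:R%:M) ->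
  (#|A| <= n)%N.
Proof.
move=> Hv.
pose B : 'M[C]_(n, #|A|) := \matrix_(r, c) v (enum_val c) r 0.
have HB : adjmx B *m B = 1%:M.
  apply/matrixP => c c'.
  have := congr1 (fun X : 'M[C]_1 => X 0 0) (Hv _ _ (enum_valP c) (enum_valP c')).
  rewrite !mxE /= (inj_eq enum_val_inj) => HH.
  rewrite mulr1n in HH; rewrite -HH.
  by apply: eq_bigr => r _; rewrite !mxE.
by rewrite -{1}(mxrank1 C #|A|) -HB (leq_trans (mxrankM_maxr _ _)) ?rank_leq_row.
Qed.

Lemma onb_mx n (v : 'I_n -> 'cV[C]_n) :
  (forall i j, adjmx (v i) *m v j = (i == j)%:R%:M) ->
  let B := \matrix_(r, c) v c r 0 in
  [/\ adjmx B *m B = 1%:M, B *m adjmx B = 1%:M &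
      forall c, B *m delta_mx c 0 = v c].
Proof.
move=> Hv B.
have HB : adjmx B *m B = 1%:M.
  apply/matrixP => c c'.
  have := congr1 (fun X : 'M[C]_1 => X 0 0) (Hv c c').
  rewrite !mxE /= mulr1n => <-.
  by apply: eq_bigr => r _; rewrite !mxE.
split => //; first exact: mulmx1C.
move=> c; rewrite -colE; apply/matrixP => r z; by rewrite ord1 !mxE.
Qed.

Lemma mx_eq_cols n (E X Y : 'M[C]_n) : E \in unitmx ->
  (forall c : 'I_n, X *m (E *m delta_mx c (0 : 'I_1)) = Y *m (E *m delta_mx c (0 : 'I_1))) -> X = Y.
Proof.
move=> Eu H.
have HXY : X *m E = Y *m E.
  apply/matrixP => r c.
  have := congr1 (fun A : 'M[C]_(n,1) => A r 0) (H c).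
  by rewrite !mulmxA -!colE !mxE.
by rewrite -(mulmxK Eu X) HXY mulmxK.
Qed.


Lemma adjmx_tens m n p q (A : 'M[C]_(m,n)) (B : 'M[C]_(p,q)) :
  adjmx (A *t B) = adjmx A *t adjmx B.
Proof. by rewrite /adjmx map_mxT trmx_tens. Qed.

Lemma tens_scalar11 (a b : C) :
  (a%:M : 'M_1) *t (b%:M : 'M_1) = (a * b)%:M.
Proof.
apply/matrixP => i j.
case: (mxtens_indexP i) => i1 i2; case: (mxtens_indexP j) => j1 j2.
by rewrite tensmxE !ord1 !mxE /= !mulr1n.
Qed.

Lemma tensZl m n p q c (A : 'M[C]_(m,n)) (B : 'M[C]_(p,q)) :
  (c *: A) *t B = c *: (A *t B).
Proof. by apply/matrixP => i j; rewrite !mxE mulrA. Qed.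

Lemma tensZr m n p q c (A : 'M[C]_(m,n)) (B : 'M[C]_(p,q)) :
  A *t (c *: B) = c *: (A *t B).
Proof. by apply/matrixP => i j; rewrite !mxE mulrCA. Qed.

Lemma ket_orth M (k l : 'I_M) :
  adjmx (ket k : 'cV[C]_M) *m ket l = (k == l)%:R%:M.
Proof.
have -> : adjmx (ket k : 'cV[C]_M) = delta_mx 0 k.
  by apply/matrixP => i j; rewrite !mxE conjC_nat andbC.
rewrite mul_delta_mx_cond; apply/matrixP => i j.
by rewrite !ord1; case: (k == l); rewrite ?mulr1n ?mulr0n !mxE.
Qed.

Lemma sqrt2_facts : let c := (sqrtC (2%:R : C))^-1 in c^* = c /\ c * c = 2%:R^-1.
Proof.
move=> c; split.
  by apply: conj_Creal; rewrite /c realV ger0_real // sqrtC_ge0 ler0n.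
by rewrite /c -invfM -expr2 sqrtCK.
Qed.

Lemma ketpm_orth (b b' : bool) :
  adjmx (ketpm b : 'cV[C]_2) *m ketpm b' = (b == b')%:R%:M.
Proof.
have [Hc Hcc] := sqrt2_facts.
rewrite /ketpm adjmxZ -scalemxAl -scalemxAr scalerA Hc Hcc.
have H2 : (2%:R : C) != 0 by rewrite pnatr_eq0.
have Hi : 'i * 'i = -1 :> C by rewrite -expr2 sqrCi.
have H11 : (1 + 1 : C) = 2%:R by [].
apply/matrixP => i j; rewrite !ord1 !mxE big_ord_recl big_ord1 !mxE /=.
have Hci : (- 'i : C)^* = 'i by rewrite rmorphN /= conjCi opprK.
case: b; case: b' => /=; rewrite ?mulr1n ?mulr0n ?rmorph1 ?mul1r.
- by rewrite conjCi mulNr Hi opprK H11 mulVf.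
- by rewrite conjCi mulrNN Hi subrr mulr0.
- by rewrite Hci Hi subrr mulr0.
- by rewrite Hci mulrN Hi opprK H11 mulVf.
Qed.

Lemma Sy_ketpm (b : bool) :
  (Sy : 'M[C]_2) *m ketpm b = (if b then 1 else -1) *: ketpm b.
Proof.
rewrite /ketpm -scalemxAr scalerA.
apply/matrixP => i j; rewrite !ord1 !mxE big_ord_recl big_ord1 !mxE /=.
have Hi2 : 'i * 'i = -1 :> C by rewrite -expr2 sqrCi.
case: i => [[|[|//]] Hi] /=; case: b => /=; rewrite ?mulr1n ?mulr0n.
- rewrite mulNr Hi2; ring.
- rewrite mulrNN Hi2; ring.
- ring.
- ring.
Qed.



Lemma e_orth M (b b' : bool) (k k' : 'I_M) :
  adjmx (ketpm b *t ket k : 'M[C]_(2 * M, 1 * 1)) *m (ketpm b' *t ket k') =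
  ((b == b') && (k == k'))%:R%:M.
Proof.
by rewrite adjmx_tens tensmx_mul ketpm_orth ket_orth tens_scalar11 -natrM mulnb.
Qed.

Lemma D_ket M (a : 'I_M -> C) (k : 'I_M) :
  (\sum_l a l *: (ket l *m adjmx (ket l))) *m (ket k : 'cV[C]_M) = a k *: ket k.
Proof.
rewrite mulmx_suml (bigD1 k) //= big1 ?addr0.
  by rewrite -scalemxAl -mulmxA ket_orth eqxx mulmx1.
move=> l /negbTE Hl.
by rewrite -scalemxAl -mulmxA ket_orth Hl /= mul_mx_scalar scale0r scaler0.
Qed.

Lemma I2_eq (x y : 'I_2) : ((x == 0) == (y == 0)) = (x == y).
Proof. by case: x => [[|[|//]] ?]; case: y => [[|[|//]] ?]. Qed.

Lemma neg_of_real (x : C) : x \is Num.real -> x != 0 -> ~~ (0 < x) -> x < 0.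
Proof.
rewrite realE => /orP[Hx|Hx] H0 Hn.
  by rewrite lt0r H0 Hx in Hn.
by rewrite lt_neqAle H0 Hx.
Qed.

Lemma tens_apply m n (A : 'M[C]_m) (B : 'M[C]_n) (x : 'cV[C]_m) (y : 'cV[C]_n) :
  (A *t B) *m (x *t y : 'cV[C]_(m * n)) = ((A *m x) *t (B *m y) : 'cV[C]_(m * n)).
Proof. have H := tensmx_mul A B x y. exact H. Qed.

Lemma tensZZ m n (c1 c2 : C) (x : 'cV[C]_m) (y : 'cV[C]_n) :
  ((c1 *: x) *t (c2 *: y) : 'cV[C]_(m * n)) = (c1 * c2) *: (x *t y).
Proof. by rewrite tensZl tensZr scalerA. Qed.

End Helpers.

(* N = 2 * M (N even); the N-dimensional space C^N is 'cV[C]_(2 * M);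
   C^2 (x) C^M is identified with C^(2*M) via mxtens_index. *)
Theorem proposition3 (C : numClosedFieldType) (M : nat)
  (p : 'I_(2 * M) -> C) (G L0 : 'M[C]_(2 * M)) :
  (* rho0 = sum_n p_n |n><n| is a density matrix (positive, trace 1) ... *)
  (forall n, 0 <= p n) ->
  \tr (diag_mx (\row_n p n)) = 1 ->
  (* ... of full rank *)
  diag_mx (\row_n p n) \in unitmx ->
  (* G Hermitian with real matrix elements *)
  hermitian_op G ->
  (forall n m, G n m \is Num.real) ->
  (* L0 is the SLD of rho_lambda at lambda = 0, and is full rank *)
  is_SLD G (diag_mx (\row_n p n)) L0 ->
  L0 \in unitmx ->
  exists (a : 'I_M -> C) (alpha : bool -> 'I_M -> 'cV[C]_(2 * M)),
    [/\ (* (3.1) alpha_{+,k} real and nonzero *)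
        (forall k, a k \is Num.real /\ a k != 0),
        (* {|alpha_{i,k}>} orthonormal (hence an orthonormal basis of C^N) *)
        (forall i j k l, adjmx (alpha i k) *m alpha j l = ((i == j) && (k == l))%:R%:M),
        (* L0 |alpha_{+-,k}> = +- alpha_{+,k} |alpha_{+-,k}> *)
        (forall i k, L0 *m alpha i k = (if i then a k else - a k) *: alpha i k),
        (* (3.2) the unitary V with V|alpha_{i,k}> = |i> (x) |k> exists ... *)
        (exists V : 'M[C]_(2 * M), V \is unitarymx /\
           forall i k, V *m alpha i k = ketpm i *t ket k) &
        (* ... and V L0 V^dagger = S_y (x) sum_k alpha_{+,k} Pi_k *)
        (forall V : 'M[C]_(2 * M), V \is unitarymx ->
           (forall i k, V *m alpha i k = ketpm i *t ket k) ->
           V *m L0 *m adjmx V = Sy *t (\sum_k a k *: (ket k *m adjmx (ket k))))].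
Proof.
move=> Hp Htr Hunit HG HGr [HL Hsld] HLu.
have Hp0 : forall n, p n != 0.
  move=> n; apply/eqP => Hn; move: Hunit.
  by rewrite unitmxE det_diag (bigD1 n) //= !mxE Hn mul0r unitr0.
have Hpr : forall n, 0 < p n by move=> n; rewrite lt0r Hp0 Hp.
have Hpc : forall n, (p n)^* = p n by move=> n; rewrite conj_Creal // ger0_real.
have HcL : forall n m, (L0 n m)^* = - L0 n m.
  move=> n m.
  have := congr1 (fun A : 'M[C]_(2*M) => A n m) Hsld.
  rewrite /commr !mul_mx_diag !mul_diag_mx !mxE => E.
  have Hc : p n + p m != 0 by rewrite lt0r_neq0 ?addr_gt0.
  have H2 : (2%:R : C) != 0 by rewrite pnatr_eq0.
  have E2 : L0 n m * (p n + p m) = 2%:R * (- 'i * (G n m * p m - p n * G n m)).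
    by rewrite E mulrA mulfV // mul1r; ring.
  apply: (mulIf Hc).
  have E3 := congr1 Num.conj E2.
  rewrite !rmorphM /= rmorphD /= !Hpc rmorphN /= conjCi rmorphB /= !rmorphM /= !Hpc (conj_Creal (HGr n m)) in E3.
rewrite conjC_nat opprK in E3. rewrite E3 mulNr E2; ring.

have HcLm : map_mx Num.conj L0 = - L0 by apply/matrixP => n m; rewrite !mxE HcL.
have Hnorm : L0 \is normalmx by apply/normalmxP; rewrite -adjmxE HL.
have Hherm : L0 \is hermsymmx by apply/is_hermitianmxP; rewrite expr0 scale1r -adjmxE HL.
have /mxOverP Hdr := hermitian_spectral_diag_real Hherm.
have HP := spectral_unitarymx L0.
have /orthomx_spectralP HLsp := Hnorm.
rewrite invmx_unitary // -adjmxE in HLsp.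
set P := spectralmx L0 in HP HLsp.
set d := spectral_diag L0 in Hdr HLsp.
have [HPQ HQP] := unitary_adj HP.
set Q := adjmx P in HLsp HPQ HQP.
have HLQ : L0 *m Q = Q *m diag_mx d by rewrite HLsp -!mulmxA HPQ mulmx1.
pose u j := col j Q.
have Hu_eig j : L0 *m u j = d 0 j *: u j.
  rewrite /u [in LHS]colE mulmxA HLQ -colE mul_mx_diag.
  by apply/matrixP => r c; rewrite !mxE mulrC.
have Hu_orth i j : adjmx (u i) *m u j = (i == j)%:R%:M.
  have H1 : (adjmx Q *m Q) i j = (i == j)%:R by rewrite adjmxK HPQ mxE.
  apply/matrixP => a b; rewrite !ord1 !mxE mulr1n -H1 !mxE.
  by apply: eq_bigr => r _; rewrite !mxE.
have Hd_real j : d 0 j \is Num.real by exact: Hdr.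
have Hd0 j : d 0 j != 0.
  apply/negP => /eqP Hd.
  have H0 : L0 *m u j = 0 by rewrite Hu_eig Hd scale0r.
  have Hu0 : u j = 0 by rewrite -(mulKmx HLu (u j)) H0 mulmx0.
  have := Hu_orth j j; rewrite Hu0 mulmx0 eqxx => /matrixP /(_ 0 0).
  by rewrite !mxE /= => /eqP; rewrite eq_sym oner_eq0.
pose w j := map_mx Num.conj (u j).
have Hw_eig j : L0 *m w j = - d 0 j *: w j.
  have := congr1 (map_mx Num.conj) (Hu_eig j).
  rewrite map_mxM HcLm cmxZ conj_Creal // mulNmx => H.
  by rewrite scaleNr -H opprK.
have Hw_orth i j : adjmx (w i) *m w j = (i == j)%:R%:M.
  by rewrite adjmx_cmx -map_mxM Hu_orth cmx_scalar conjC_nat.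
have Hadj_eig j : adjmx (u j) *m L0 = d 0 j *: adjmx (u j).
  by rewrite -{1}HL -adjmxM Hu_eig adjmxZ conj_Creal.
have Huw i j : d 0 i + d 0 j != 0 -> adjmx (u i) *m w j = 0.
  move=> Hs.
  have H1 : adjmx (u i) *m L0 *m w j = d 0 i *: (adjmx (u i) *m w j).
    by rewrite Hadj_eig scalemxAl.
  have H2 : adjmx (u i) *m L0 *m w j = - d 0 j *: (adjmx (u i) *m w j).
    by rewrite -mulmxA Hw_eig scalemxAr.
  have : (d 0 i + d 0 j) *: (adjmx (u i) *m w j) = 0.
    by rewrite scalerDl -H1 H2 scaleNr addNr.
  by move/eqP; rewrite scaler_eq0 (negbTE Hs) /= => /eqP.
have Hwu i j : d 0 i + d 0 j != 0 -> adjmx (w j) *m u i = 0.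
  by move=> Hs; rewrite -[u i]adjmxK -adjmxM Huw // adjmx0.
have Hcount : forall S : {set 'I_(2 * M)},
    (forall i j, i \in S -> j \in S -> d 0 i + d 0 j != 0) ->
    (2 * #|S| <= 2 * M)%N.
  move=> S HS.
  pose A := [set x : bool * 'I_(2 * M) | x.2 \in S].
  pose v (x : bool * 'I_(2 * M)) := if x.1 then u x.2 else w x.2.
  have HA : #|A| = (2 * #|S|)%N.
    have -> : A = setX [set: bool] S by apply/setP => x; rewrite !inE.
    by rewrite cardsX cardsT card_bool.
  rewrite -HA; apply: (@onb_bound _ _ _ A v).
  case=> [b i] [b' j]; rewrite !inE /= => Hi Hj.
  rewrite /v xpair_eqE /=; case: b; case: b' => /=;
    try rewrite Hu_orth; try rewrite Hw_orth; try rewrite Huw ?HS //; try rewrite Hwu ?HS //;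
    first [reflexivity | by apply/matrixP => ? ?; rewrite !mxE mul0rn].
set S := [set j | 0 < d 0 j].
have HS1 := Hcount S.
have HS2 := Hcount (~: S).
have HS3 := cardsC S.
rewrite card_ord in HS3.
have HsM : #|S| = M.
  have H1 : (2 * #|S| <= 2 * M)%N.
    by apply: HS1 => i j; rewrite !inE => Hi Hj; rewrite lt0r_neq0 // addr_gt0.
  have H2 : (2 * #|~: S| <= 2 * M)%N.
    apply: HS2 => i j; rewrite !inE => Hi Hj.
    have Hi' := @neg_of_real _ _ (Hd_real i) (Hd0 i) Hi.
    have Hj' := @neg_of_real _ _ (Hd_real j) (Hd0 j) Hj.
    by rewrite -oppr_eq0 opprD lt0r_neq0 // addr_gt0 // oppr_gt0.
  lia.
pose f (k : 'I_M) : 'I_(2 * M) := @enum_val _ (pred_of_set S) (cast_ord (esym HsM) k).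
have Hf_in k : 0 < d 0 (f k).
  by have := enum_valP (cast_ord (esym HsM) k); rewrite inE.
have Hf_inj : injective f.
  by move=> k l /enum_val_inj /cast_ord_inj.
pose alpha (b : bool) (k : 'I_M) := if b then u (f k) else w (f k).
have Hsum k l : d 0 (f k) + d 0 (f l) != 0 by rewrite lt0r_neq0 // addr_gt0.
have Halpha_orth : forall i j k l,
    adjmx (alpha i k) *m alpha j l = ((i == j) && (k == l))%:R%:M.
  case; case => k l; rewrite /alpha /=;
    try rewrite Hu_orth; try rewrite Hw_orth; try rewrite Huw //; try rewrite Hwu //;
    rewrite ?(inj_eq Hf_inj);
    first [reflexivity | by apply/matrixP => ? ?; rewrite !mxE mul0rn].
have Heig b k : L0 *m alpha b k = (if b then d 0 (f k) else - d 0 (f k)) *: alpha b k.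
  by case: b; [exact: Hu_eig | exact: Hw_eig].
pose bb (c : 'I_(2 * M)) := ((mxtens_unindex c).1 == 0 :> 'I_2).
pose kk (c : 'I_(2 * M)) := (mxtens_unindex c).2 : 'I_M.
have Hidx c c' : ((bb c == bb c') && (kk c == kk c')) = (c == c').
  rewrite /bb /kk I2_eq -xpair_eqE -!surjective_pairing.
  by rewrite (inj_eq (can_inj (@mxtens_unindexK _ _))).
pose ev (c : 'I_(2 * M)) : 'cV[C]_(2 * M) := ketpm (bb c) *t ket (kk c).
have Hev c c' : adjmx (ev c) *m ev c' = (c == c')%:R%:M by rewrite e_orth Hidx.
have [HE1 HE2 HE3] := @onb_mx _ _ ev Hev.
set E := \matrix_(r, c) ev c r 0 in HE1 HE2 HE3.
pose av (c : 'I_(2 * M)) := alpha (bb c) (kk c).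
have Hav c c' : adjmx (av c) *m av c' = (c == c')%:R%:M by rewrite Halpha_orth Hidx.
have [HA1 HA2 HA3] := @onb_mx _ _ av Hav.
set Amx := \matrix_(r, c) av c r 0 in HA1 HA2 HA3.
pose bi (b : bool) : 'I_2 := if b then ord0 else ord_max.
have Hbi b k : bb (mxtens_index (bi b, k)) = b /\ kk (mxtens_index (bi b, k)) = k.
  by rewrite /bb /kk mxtens_indexK; case: b.
exists (fun k => d 0 (f k)), alpha; split.
- by move=> k; split; [exact: Hd_real | exact: Hd0].
- exact: Halpha_orth.
- exact: Heig.
- exists (E *m adjmx Amx); split.
    apply/unitarymxP; rewrite -adjmxE adjmxM adjmxK mulmxA -(mulmxA E) HA1 mulmx1.
    exact: HE2.
  move=> b k; have [H1 H2] := Hbi b k.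
  have := HA3 (mxtens_index (bi b, k)); rewrite /av H1 H2 => <-.
  rewrite -mulmxA (mulmxA (adjmx _)) HA1 mul1mx HE3 /ev H1 H2.
  by [].
move=> V HV HVa; have [HVV HVV'] := unitary_adj HV.
have HEu : E \in unitmx by case: (mulmx1_unit HE1).
apply: (mx_eq_cols _ _ _ _ HEu) => c; rewrite HE3.
case: (mxtens_indexP c) => j k.
have -> : j = bi (j == 0) by case: j => [[|[|//]] ?]; apply: val_inj.
move: (j == 0) => b; have [H1 H2] := Hbi b k.
rewrite /ev H1 H2.
have Hinv : adjmx V *m (ketpm b *t ket k) = alpha b k.
  by rewrite -HVa mulmxA HVV' mul1mx.
rewrite -mulmxA Hinv -mulmxA Heig -scalemxAr HVa.
rewrite tens_apply Sy_ketpm (D_ket _ (fun k => d 0 (f k))) tensZZ.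
by case: b H1 H2 Hinv => *; rewrite ?mul1r ?mulN1r ?mulrN1.
Qed.
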